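(* Let $n$ be even and let $F\colon \mathbb F_2^n\to\mathbb F_2^n$ be a quadratic APN function. For $b\in\mathbb F_2^n\setminus\{0\}$ let $V_b=T_b\cup\overline{T_b}$ as defined in the context. Then the collection $\{V_b\colon b\in\mathbb F_2^n\setminus\{0\}\}$ is a vector space partition of $\mathbb F_2^n$, i.e. each $V_b$ is a subspace, $V_{b_1}\cap V_{b_2}=\{0\}$ for $b_1\neq b_2$, and every nonzero vector of $\mathbb F_2^n$ lies in some $V_b$.
   Context: $\langle\cdot,\cdot\rangle$ is the standard dot product on $\mathbb F_2^n$. A function $F\colon\mathbb F_2^n\to\mathbb F_2^n$ is APN if for every $a\neq 0$ and every $c$, the equation $F(x)+F(x+a)=c$ has at most $2$ solutions $x$. $F$ is quadratic if every component function $x\mapsto\langle b,F(x)\rangle$ is the sum of a quadratic form and an affine function over $\mathbb F_2$. Put $D_{F,a}(x)=F(x)+F(x+a)$, $H_b=\{x\colon\langle b,x\rangle=0\}$, $\overline{H_b}=\{x\colon\langle b,x\rangle=1\}$, $T_b=\{a\in\mathbb F_2^n\colon \mathrm{Im}(D_{F,a})=H_b\}\cup\{0\}$, $\overline{T_b}=\{a\in\mathbb F_2^n\colon \mathrm{Im}(D_{F,a})=\overline{H_b}\}$, and $V_b=T_b\cup\overline{T_b}$. (For a quadratic APN function and $a\ne 0$, $\mathrm{Im}(D_{F,a})$ is an affine hyperplane; $V_b$ is a linear subspace.) *)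

(* Defs.v *)
From mathcomp Require Import all_boot all_order all_algebra.
Set Implicit Arguments. Unset Strict Implicit. Unset Printing Implicit Defensive.
Import GRing.Theory.
Local Open Scope ring_scope.

Notation vecF2 n := 'rV['F_2]_n.

Definition dotF2 n (b x : vecF2 n) : 'F_2 := \sum_(i < n) b 0 i * x 0 i.

Definition APN n (F : vecF2 n -> vecF2 n) : Prop :=
  forall a c : vecF2 n, a != 0 -> (#|[set x | (F x + F (x + a) == c)%R]| <= 2)%N.

Definition is_quadratic_form n (q : vecF2 n -> 'F_2) : Prop :=
  exists Q : 'M['F_2]_n,
    forall x, q x = \sum_(i < n) \sum_(j < n | (i <= j)%N) Q i j * x 0 i * x 0 j.

Definition is_affine_fun n (l : vecF2 n -> 'F_2) : Prop :=
  exists (u : vecF2 n) (c : 'F_2), forall x, l x = dotF2 u x + c.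

Definition quadratic n (F : vecF2 n -> vecF2 n) : Prop :=
  forall b : vecF2 n, exists q l,
    is_quadratic_form q /\ is_affine_fun l /\
    forall x, dotF2 b (F x) = q x + l x.

Definition DF n (F : vecF2 n -> vecF2 n) (a : vecF2 n) (x : vecF2 n) :=
  F x + F (x + a).

Definition ImD n (F : vecF2 n -> vecF2 n) (a : vecF2 n) : {set vecF2 n} :=
  [set DF F a x | x in [set: vecF2 n]].

Definition Hb n (b : vecF2 n) : {set vecF2 n} := [set x | dotF2 b x == 0].
Definition Hbbar n (b : vecF2 n) : {set vecF2 n} := [set x | dotF2 b x == 1].

Definition Tb n (F : vecF2 n -> vecF2 n) (b : vecF2 n) : {set vecF2 n} :=
  [set a | ImD F a == Hb b] :|: [set 0].
Definition Tbbar n (F : vecF2 n -> vecF2 n) (b : vecF2 n) : {set vecF2 n} :=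
  [set a | ImD F a == Hbbar b].
Definition Vb n (F : vecF2 n -> vecF2 n) (b : vecF2 n) : {set vecF2 n} :=
  Tb F b :|: Tbbar F b.

Definition is_subspace n (S : {set vecF2 n}) : Prop :=
  0 \in S /\ (forall x y, x \in S -> y \in S -> x + y \in S) /\
  (forall (k : 'F_2) x, x \in S -> k *: x \in S).

(* Main.v *)
Require Import Defs.
From mathcomp Require Import all_boot all_order all_algebra.
From mathcomp Require Import ring zify.
Import GRing.Theory.
Local Open Scope ring_scope.
Set Implicit Arguments. Unset Strict Implicit.


Lemma F2_cases (x : 'F_2) : x = 0 \/ x = 1.
Proof. case: x => [[|[|k]]] //= Hk. by left; apply: val_inj. by right; apply: val_inj. Qed.

Lemma F2two : (2%:R : 'F_2) = 0.
Proof. by apply: val_inj. Qed.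

Lemma F2self (x : 'F_2) : x + x = 0.
Proof. by rewrite -mulr2n -mulr_natr F2two mulr0. Qed.

Lemma vself n (x : 'rV['F_2]_n) : x + x = 0.
Proof. by apply/rowP => j; rewrite !mxE F2self. Qed.

Lemma dotE n (b x : 'rV['F_2]_n) : dotF2 b x = (x *m b^T) 0 0.
Proof. rewrite /dotF2 mxE; apply: eq_bigr => i _; by rewrite mxE mulrC. Qed.

Lemma dotD n (b x y : 'rV['F_2]_n) : dotF2 b (x + y) = dotF2 b x + dotF2 b y.
Proof. by rewrite !dotE mulmxDl mxE. Qed.

Lemma dot0 n (b : 'rV['F_2]_n) : dotF2 b 0 = 0.
Proof. by rewrite dotE mul0mx mxE. Qed.

Lemma dot_delta n (j : 'I_n) (x : 'rV['F_2]_n) : dotF2 (delta_mx 0 j) x = x 0 j.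
Proof.
rewrite /dotF2 (bigD1 j) //= big1 ?addr0.
  by rewrite mxE !eqxx mul1r.
by move=> i ne; rewrite mxE (negbTE ne) andbF mul0r.
Qed.

Lemma vec_eqdot n (x y : 'rV['F_2]_n) : (forall b, dotF2 b x = dotF2 b y) -> x = y.
Proof. by move=> H; apply/rowP => j; rewrite -!dot_delta. Qed.

Definition qf n (Q : 'M['F_2]_n) (x : 'rV['F_2]_n) :=
  \sum_(i < n) \sum_(j < n | (i <= j)%N) Q i j * x 0 i * x 0 j.

Definition qpol n (Q : 'M['F_2]_n) (x a : 'rV['F_2]_n) :=
  \sum_(i < n) \sum_(j < n | (i <= j)%N) Q i j * (x 0 i * a 0 j + a 0 i * x 0 j).

Lemma qf_polar n (Q : 'M['F_2]_n) x a :
  qf Q x + qf Q (x + a) + qf Q 0 + qf Q a = qpol Q x a.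
Proof.
rewrite /qf /qpol -!big_split; apply: eq_bigr => i _; rewrite -!big_split.
apply: eq_bigr => j _ /=; rewrite !mxE.
move: (Q i j) (x 0 i) (x 0 j) (a 0 i) (a 0 j) => q xi xj ai aj.
transitivity (q * (xi * aj + ai * xj) + (q * (xi * xj + ai * aj)) * 2%:R); first ring.
by rewrite F2two mulr0 addr0.
Qed.

Lemma qpolD n (Q : 'M['F_2]_n) x y a : qpol Q (x + y) a = qpol Q x a + qpol Q y a.
Proof.
rewrite /qpol -!big_split; apply: eq_bigr => i _; rewrite -!big_split.
apply: eq_bigr => j _ /=; rewrite !mxE; ring.
Qed.

Definition Phi n (F : 'rV['F_2]_n -> 'rV['F_2]_n) x a := F x + F (x + a) + F 0 + F a.

Lemma Phi_dot n (F : 'rV['F_2]_n -> 'rV['F_2]_n) : quadratic F ->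
  forall b a, exists Q, forall z, dotF2 b (Phi F z a) = qpol Q z a.
Proof.
move=> hq b a; have [q [l [[Q hQ] [[u [c hl]] hF]]]] := hq b.
exists Q => z; rewrite -qf_polar /Phi !dotD !hF !hl !hQ -!/(qf Q _) !dotD dot0.
move: (qf Q z) (qf Q (z + a)) (qf Q 0) (qf Q a) (dotF2 u z) (dotF2 u a) => q1 q2 q3 q4 d1 d2.
transitivity (q1 + q2 + q3 + q4 + (d1 + d2 + c + c) * 2%:R); first ring.
by rewrite F2two mulr0 addr0.
Qed.

Lemma Phi_add n (F : 'rV['F_2]_n -> 'rV['F_2]_n) : quadratic F ->
  forall x y a, Phi F (x + y) a = Phi F x a + Phi F y a.
Proof.
move=> hq x y a; apply: vec_eqdot => b; have [Q hQ] := Phi_dot hq b a.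
by rewrite dotD !hQ qpolD.
Qed.

Lemma Phi_sym n (F : 'rV['F_2]_n -> 'rV['F_2]_n) x a : Phi F x a = Phi F a x.
Proof.
apply: vec_eqdot => b; rewrite /Phi [a + x]addrC !dotD; ring.
Qed.

Lemma Phi_0a n (F : 'rV['F_2]_n -> 'rV['F_2]_n) a : Phi F 0 a = 0.
Proof.
apply: vec_eqdot => b; rewrite /Phi add0r !dotD dot0.
transitivity ((dotF2 b (F 0) + dotF2 b (F a)) * 2%:R); first ring.
by rewrite F2two mulr0.
Qed.

Lemma Phi_x0 n (F : 'rV['F_2]_n -> 'rV['F_2]_n) a : Phi F a 0 = 0.
Proof. by rewrite Phi_sym Phi_0a. Qed.

Lemma Phi_xx n (F : 'rV['F_2]_n -> 'rV['F_2]_n) a : Phi F a a = 0.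
Proof.
apply: vec_eqdot => b; rewrite /Phi vself !dotD dot0.
transitivity ((dotF2 b (F 0) + dotF2 b (F a)) * 2%:R); first ring.
by rewrite F2two mulr0.
Qed.

Lemma DF_Phi n (F : 'rV['F_2]_n -> 'rV['F_2]_n) a x :
  DF F a x = Phi F x a + DF F a 0.
Proof.
apply: vec_eqdot => b; rewrite /Phi /DF add0r !dotD.
transitivity (dotF2 b (F x) + dotF2 b (F (x + a)) + (dotF2 b (F 0) + dotF2 b (F a)) * 2%:R); last ring.
by rewrite F2two mulr0 addr0.
Qed.


Lemma Phi_sum n (F : 'rV['F_2]_n -> 'rV['F_2]_n) (hq : quadratic F) a
  (I : Type) (r : seq I) (P : pred I) (f : I -> 'rV['F_2]_n) :
  Phi F (\sum_(i <- r | P i) f i) a = \sum_(i <- r | P i) Phi F (f i) a.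
Proof.
apply: (big_morph (fun x => Phi F x a)) => [x y|]; first exact: Phi_add.
exact: Phi_0a.
Qed.

Lemma Phi_scale n (F : 'rV['F_2]_n -> 'rV['F_2]_n) k x a :
  Phi F (k *: x) a = k *: Phi F x a.
Proof. by case: (F2_cases k) => ->; rewrite ?scale0r ?Phi_0a ?scale1r. Qed.

Definition Lm n (F : 'rV['F_2]_n -> 'rV['F_2]_n) a : 'M['F_2]_n :=
  \matrix_(i, j) Phi F (delta_mx 0 i) a 0 j.

Lemma mulL n (F : 'rV['F_2]_n -> 'rV['F_2]_n) (hq : quadratic F) a x :
  x *m Lm F a = Phi F x a.
Proof.
rewrite mulmx_sum_row {2}(row_sum_delta x) (Phi_sum hq).
apply: eq_bigr => i _; rewrite Phi_scale; congr (_ *: _).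
by apply/rowP => j; rewrite !mxE.
Qed.

Lemma ker_Phi n (F : 'rV['F_2]_n -> 'rV['F_2]_n) : APN F ->
  forall a x : 'rV['F_2]_n, a != 0 -> Phi F x a = 0 -> x = 0 \/ x = a.
Proof.
move=> hapn a x ha hx.
have oppS (w : 'rV['F_2]_n) : - w = w.
  by apply/eqP; rewrite eq_sym -subr_eq0 opprK vself.
have hcard := hapn a (F 0 + F a) ha.
set S := [set _ | _] in hcard.
have S0 : 0 \in S by rewrite inE add0r.
have Sa : a \in S by rewrite inE vself addrC.
have Sx : x \in S.
  rewrite inE; move: hx; rewrite /Phi -addrA => /eqP.
  by rewrite addr_eq0 oppS.
case: (eqVneq x 0) => [hx0|x0]; first by left.
case: (eqVneq x a) => [hxa|xa]; first by right.
have : (size [:: 0%R; a; x] <= #|S|)%N.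
  rewrite cardE; apply: uniq_leq_size.
    rewrite /= !inE negb_or eq_sym ha eq_sym x0 /= eq_sym xa //.
  by move=> z; rewrite mem_enum !in_cons in_nil orbF => /orP [/eqP -> | /orP [] /eqP ->].
by move/leq_trans/(_ hcard).
Qed.

Lemma sub_rank_eq (m1 m2 k : nat) (A : 'M['F_2]_(m1, k)) (B : 'M['F_2]_(m2, k)) :
  (A <= B)%MS -> (\rank B <= \rank A)%N -> (B <= A)%MS.
Proof.
move=> sAB le; rewrite -(mxrank_leqif_sup sAB).2 eqn_leq le andbT.
exact: mxrankS.
Qed.

Lemma rank_L n (F : 'rV['F_2]_n -> 'rV['F_2]_n) (hq : quadratic F) (hapn : APN F) a :
  a != 0 -> (\rank (Lm F a)).+1 = n.
Proof.
move=> ha.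
have sK : (kermx (Lm F a) <= a)%MS.
  apply/row_subP => i.
  have : row i (kermx (Lm F a)) *m Lm F a = 0 by rewrite -row_mul mulmx_ker row0.
  rewrite (mulL hq) => /(ker_Phi hapn ha) [] ->; [exact: sub0mx | exact: submx_refl].
have sa : (a <= kermx (Lm F a))%MS by apply/sub_kermxP; rewrite (mulL hq) Phi_xx.
have := mxrank_ker (Lm F a).
rewrite (@eqmx_rank _ _ _ _ _ a); last by rewrite sK sa.
rewrite rank_rV ha.
have := rank_leq_row (Lm F a).
lia.
Qed.

Lemma rank_Kb n (b : 'rV['F_2]_n) : b != 0 -> (\rank (kermx b^T)).+1 = n.
Proof.
move=> hb; have := mxrank_ker b^T; rewrite mxrank_tr rank_rV hb.
have := rank_leq_col b; rewrite rank_rV hb.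
lia.
Qed.

Lemma zero_cV n (w : 'cV['F_2]_n) : (forall x : 'rV_n, (x *m w) 0 0 = 0) -> w = 0.
Proof.
move=> H; apply/matrixP => i j; rewrite ord1 [RHS]mxE.
by have := H (delta_mx 0 i); rewrite -rowE mxE.
Qed.


Lemma L0 n (F : 'rV['F_2]_n -> 'rV['F_2]_n) : Lm F 0 = 0.
Proof. apply/matrixP => i j; rewrite mxE. have -> := Phi_x0 F (delta_mx 0 i). rewrite !mxE. reflexivity. Qed.

Lemma dotPhi n (F : 'rV['F_2]_n -> 'rV['F_2]_n) (hq : quadratic F) b a x :
  dotF2 b (Phi F x a) = (x *m (Lm F a *m b^T)) 0 0.
Proof. by rewrite dotE -(mulL hq) mulmxA. Qed.

Lemma charV n (F : 'rV['F_2]_n -> 'rV['F_2]_n) (hq : quadratic F) (hapn : APN F)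
  (b a : 'rV['F_2]_n) : b != 0 ->
  (a \in Vb F b) <-> (Lm F a *m b^T = 0).
Proof.
move=> hb.
case: (eqVneq a 0) => [->|ha].
  by rewrite L0 mul0mx; split => // _; rewrite !inE eqxx orbT.
set c := DF F a 0.
have hDF x : dotF2 b (DF F a x) = (x *m (Lm F a *m b^T)) 0 0 + dotF2 b c.
  by rewrite (DF_Phi F a x) dotD (dotPhi hq).
split.
  move=> hV.
  have [e he] : exists e, forall x, dotF2 b (DF F a x) = e.
    move: hV; rewrite !inE => /orP [/orP [/eqP hI | /eqP a0] | /eqP hI].
    - exists 0 => x; have : DF F a x \in ImD F a by apply/imsetP; exists x.
      by rewrite hI inE => /eqP.
    - by rewrite a0 eqxx in ha.
    - exists 1 => x; have : DF F a x \in ImD F a by apply/imsetP; exists x.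
      by rewrite hI inE => /eqP.
  apply: zero_cV => x.
  have hx := hDF x; rewrite /c !he in hx.
  have := congr1 (fun z => z + e) hx; rewrite /= -addrA !F2self addr0.
  by move=> <-.
move=> hL.
set e := dotF2 b c.
have allE x : dotF2 b (DF F a x) = e by rewrite hDF hL mulmx0 mxE add0r.
have surj y : dotF2 b y = e -> exists x, DF F a x = y.
  move=> hy.
  have sLK : (Lm F a <= kermx b^T)%MS by apply/sub_kermxP.
  have sKL : (kermx b^T <= Lm F a)%MS.
    apply: sub_rank_eq => //.
    by have := rank_Kb hb; have := rank_L hq hapn ha; lia.
  have : ((y + c)%R <= kermx b^T)%MS.
    apply/sub_kermxP; apply/matrixP => i j; rewrite (ord1 i) (ord1 j) [RHS]mxE.
    by rewrite -dotE dotD hy F2self.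
  move=> /(submx_trans)/(_ sKL)/submxP [D hD].
  exists D; rewrite DF_Phi -(mulL hq) -hD -/c -addrA vself addr0 //.
rewrite !inE; case: (F2_cases e) => he.
- apply/orP; left; apply/orP; left; apply/eqP/setP => y; rewrite !inE.
  apply/imsetP/eqP => [[x _ ->] | hy]; first by rewrite allE.
  by have [x hx] := surj y (etrans hy (esym he)); exists x.
- apply/orP; right; apply/eqP/setP => y; rewrite !inE.
  apply/imsetP/eqP => [[x _ ->] | hy]; first by rewrite allE.
  by have [x hx] := surj y (etrans hy (esym he)); exists x.
Qed.

Unset Implicit Arguments. Set Strict Implicit.


Theorem mainTheorem1 (n : nat) (F : 'rV['F_2]_n -> 'rV['F_2]_n) :
  ~~ odd n -> quadratic F -> APN F ->
  [/\ (forall b : 'rV['F_2]_n, b != 0 -> is_subspace (Vb F b)),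
      (forall b1 b2 : 'rV['F_2]_n, b1 != 0 -> b2 != 0 -> b1 != b2 ->
          Vb F b1 :&: Vb F b2 = [set 0]) &
      (forall x : 'rV['F_2]_n, x != 0 -> exists2 b, b != 0 & x \in Vb F b)].
Proof.
move=> _ hq hapn.
have LD a1 a2 : Lm F (a1 + a2) = Lm F a1 + Lm F a2.
  apply/row_matrixP => i; rewrite !rowE mulmxDr !(mulL hq) !(Phi_sym F (delta_mx 0 i)); exact: Phi_add.
have V0 b : b != 0 -> (0 : 'rV['F_2]_n) \in Vb F b.
  by move=> hb; apply/(charV hq hapn _ hb); rewrite L0 mul0mx.
split.
- move=> b hb; split; first exact: V0.
  split.
    move=> x y /(charV hq hapn _ hb) hx /(charV hq hapn _ hb) hy.
    by apply/(charV hq hapn _ hb); rewrite LD mulmxDl hx hy addr0.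
  move=> k x hx; case: (F2_cases k) => ->; first by rewrite scale0r; exact: V0.
  by rewrite scale1r.
- move=> b1 b2 hb1 hb2 hne; apply/setP => a; rewrite in_setI in_set1.
  case: (eqVneq a 0) => [->|ha]; first by rewrite !V0.
  apply/negbTE/negP => /andP [/(charV hq hapn _ hb1) h1 /(charV hq hapn _ hb2) h2].
  set K1 := kermx b1^T.
  have sLK : (Lm F a <= K1)%MS by apply/sub_kermxP.
  have sKL : (K1 <= Lm F a)%MS.
    apply: sub_rank_eq => //.
    by rewrite /K1; have := rank_Kb hb1; have := rank_L hq hapn ha; lia.
  have hK2 : K1 *m b2^T = 0.
    by move/submxP: sKL => [D ->]; rewrite -mulmxA h2 mulmx0.
  have s2 : (b2 <= kermx K1^T)%MS.
    by apply/sub_kermxP; rewrite -[b2]trmxK -trmx_mul hK2 trmx0.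
  have s1 : (b1 <= kermx K1^T)%MS.
    by apply/sub_kermxP; rewrite -[b1]trmxK -trmx_mul mulmx_ker trmx0.
  have s21 : (kermx K1^T <= b1)%MS.
    apply: sub_rank_eq => //.
    rewrite mxrank_ker mxrank_tr rank_rV hb1.
    rewrite /K1 /=; have := rank_Kb hb1; lia.
  have /submxP [D hD] := submx_trans s2 s21.
  move: hD; rewrite [D]mx11_scalar mul_scalar_mx.
  case: (F2_cases (D 0 0)) => ->; rewrite ?scale0r ?scale1r => hD.
    by rewrite hD eqxx in hb2.
  by rewrite hD eqxx in hne.
- move=> a ha.
  set K := kermx (Lm F a)^T.
  have rK : \rank K = 1%N.
    rewrite mxrank_ker mxrank_tr.
    by have := rank_L hq hapn ha; lia.
  have K0 : K != 0 by rewrite -mxrank_eq0 rK.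
  have [i hi] : exists i, row i K != 0.
    case: (pickP (fun i => row i K != 0)) => [i hi | h]; first by exists i.
    move: K0; have -> : K = 0.
      by apply/row_matrixP => i; move: (h i) => /negbFE/eqP ->; rewrite row0.
    by rewrite eqxx.
  exists (row i K) => //.
  apply/(charV hq hapn _ hi).
  by rewrite -[Lm F a]trmxK -trmx_mul -row_mul mulmx_ker row0 trmx0.
Qed.
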